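(* Let $t,w,w',n,g$ be positive integers with $t\le w\le w'$. Suppose that there exists a $t$-resolvable Steiner system $\mathrm{S}(w,w',n)$. If there exists a large set $\mathrm{LGS}(t,w,w',g)$, then there exists a large set $\mathrm{LGS}(t,w,n,g)$.
   Context: A Steiner system $\mathrm{S}(s,k,n)$ is a pair $(X,\mathcal{B})$ with $|X|=n$ and $\mathcal{B}$ a family of $k$-subsets (blocks) of $X$ such that every $s$-subset of $X$ lies in exactly one block. An $\mathrm{S}(w,w',n)$ $(X,\mathcal{B})$ is $t$-resolvable ($t\le w$) if $\mathcal{B}$ can be partitioned into subfamilies each of which is the block set of an $\mathrm{S}(t,w',n)$ on $X$. For a set $Y$ of size $m$, let $X=Y\times[g]$ with groups $\{y\}\times[g]$. An H-design $\mathrm{H}(m,g,w,t)$ is a family of $w$-subsets (blocks) of $X$, each meeting every group in at most one point, such that every $t$-subset of $X$ with points in $t$ distinct groups lies in exactly one block. A block $\{(y_1,a_1),\dots,(y_w,a_w)\}$ is identified with the word indexed by $Y$ over $\{0\}\cup[g]$ having entry $a_s$ at coordinate $y_s$ and $0$ elsewhere. A generalized Steiner system $\mathrm{GS}(t,w,m,g)$ is an $\mathrm{H}(m,g,w,t)$ in which any two distinct blocks have Hamming distance at least $2(w-t)+1$. A large set $\mathrm{LGS}(t,w,m,g)$ is a partition of the set of all $w$-subsets of $Y\times[g]$ meeting each group in at most one point into block sets of $\mathrm{GS}(t,w,m,g)$'s (on the same groups). *)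

(* Defs.v *)
From mathcomp Require Import all_boot.
Unset Printing Implicit Defensive.

Definition steiner (s k n : nat) (B : {set {set 'I_n}}) : Prop :=
  (forall b, b \in B -> #|b| = k) /\
  (forall S : {set 'I_n}, #|S| = s -> exists! b, b \in B /\ S \subset b).

Definition t_resolvable (t w w' n : nat) (B : {set {set 'I_n}}) : Prop :=
  steiner w w' n B /\
  exists P : {set {set {set 'I_n}}},
    partition P B /\ forall C, C \in P -> steiner t w' n C.

(* Points Y x [g] with Y = 'I_m, [g] = 'I_g; group of y is {y} x [g]. *)
Definition pts (m g : nat) := ('I_m * 'I_g)%type.

Definition partial_transversal m g (b : {set pts m g}) : bool :=
  [forall y : 'I_m, #|[set p in b | p.1 == y]| <= 1].

Definition distinct_groups m g (S : {set pts m g}) : bool :=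
  [forall p in S, forall q in S, (p.1 == q.1) ==> (p == q)].

Definition Hdesign (m g w t : nat) (B : {set {set pts m g}}) : Prop :=
  (forall b, b \in B -> #|b| = w /\ partial_transversal m g b) /\
  (forall S : {set pts m g}, #|S| = t -> distinct_groups m g S ->
     exists! b, b \in B /\ S \subset b).

(* Word of a block: coordinate y carries Some a if (y,a) is in the block,
   None (the symbol 0) otherwise. *)
Definition word m g (b : {set pts m g}) (y : 'I_m) : option 'I_g :=
  [pick a : 'I_g | (y, a) \in b].

Definition hamming m g (b1 b2 : {set pts m g}) : nat :=
  #|[set y : 'I_m | word m g b1 y != word m g b2 y]|.

Definition GS (t w m g : nat) (B : {set {set pts m g}}) : Prop :=
  Hdesign m g w t B /\
  (forall b1 b2, b1 \in B -> b2 \in B -> b1 != b2 ->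
     2 * (w - t) + 1 <= hamming m g b1 b2).

Definition all_wsets (w m g : nat) : {set {set pts m g}} :=
  [set b : {set pts m g} | (#|b| == w) && partial_transversal m g b].

Definition LGS (t w m g : nat) : Prop :=
  exists P : {set {set {set pts m g}}},
    partition P (all_wsets w m g) /\ forall B, B \in P -> GS t w m g B.

(* Main.v *)
Require Import Defs.
From mathcomp Require Import all_boot zify.
Set Implicit Arguments. Unset Strict Implicit.

Lemma ptP m g (X : {set pts m g}) :
  reflect {in X &, forall p q, p.1 = q.1 -> p = q} (partial_transversal m g X).
Proof.
apply: (iffP forallP) => [H p q pX qX e|H y].
  have /card_le1_eqP K := H p.1.
  by apply: K; rewrite !inE ?pX ?qX ?e //=.
apply/card_le1_eqP => p q; rewrite !inE => /andP[pX /eqP e1] /andP[qX /eqP e2].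
by apply: H => //; rewrite e1 e2.
Qed.

Lemma dgP m g (X : {set pts m g}) :
  reflect {in X &, forall p q, p.1 = q.1 -> p = q} (distinct_groups m g X).
Proof.
apply: (iffP forallP) => [H p q pX qX e|H p].
  by have /implyP := H p; move/(_ pX)/forall_inP/(_ q qX)/implyP; rewrite e eqxx => /(_ isT)/eqP.
apply/implyP => pX; apply/forall_inP => q qX; apply/implyP => /eqP e.
by apply/eqP; apply: H.
Qed.

Definition supp m g (X : {set pts m g}) : {set 'I_m} := [set p.1 | p in X].

Lemma card_supp m g (X : {set pts m g}) :
  {in X &, forall p q, p.1 = q.1 -> p = q} -> #|supp X| = #|X|.
Proof. by move=> H; apply: card_in_imset. Qed.

Lemma word_supp m g (X : {set pts m g}) z : (word m g X z != None) = (z \in supp X).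
Proof.
rewrite /word; case: pickP => [a Ha|H] /=.
  by apply/esym; apply/imsetP; exists (z, a).
apply/esym/negbTE/imsetP => [[[y a] Ha /= e]]; subst y.
by have := H a; rewrite Ha.
Qed.

Lemma steiner_uniq s k n (B : {set {set 'I_n}}) (T b b' : {set 'I_n}) :
  steiner s k n B -> #|T| = s -> b \in B -> T \subset b -> b' \in B -> T \subset b' -> b = b'.
Proof.
move=> [_ H] /H [b0 [_ U]] bB Tb b'B Tb'.
by rewrite -(U b) // -(U b').
Qed.

Lemma part_uniq T (P : {set {set T}}) D A1 A2 x :
  partition P D -> A1 \in P -> A2 \in P -> x \in A1 -> x \in A2 -> A1 = A2.
Proof.
case/and3P => _ /trivIsetP H _ A1P A2P x1 x2.
apply/eqP; apply: contraTT isT => ne.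
by rewrite (disjointFr (H _ _ A1P A2P ne) x1) in x2.
Qed.

Lemma part_in T (P : {set {set T}}) D A x :
  partition P D -> A \in P -> x \in A -> x \in D.
Proof.
move=> /cover_partition <- AP xA; apply/bigcupP; by exists A.
Qed.

Lemma part_ex T (P : {set {set T}}) D x :
  partition P D -> x \in D -> exists2 A, A \in P & x \in A.
Proof. by move=> /cover_partition <- /bigcupP. Qed.

Lemma part_ne T (P : {set {set T}}) D A :
  partition P D -> A \in P -> exists x, x \in A.
Proof.
case/and3P => _ _ H AP; apply/set0Pn; apply: contraNneq H => <-; exact AP.
Qed.

Lemma small_inter n (T : {set 'I_n}) t :
  t <= #|T| -> exists S : {set 'I_n}, S \subset T /\ #|S| = t.
Proof.
rewrite -bin_gt0 -cards_draws => /card_gt0P [S]; rewrite inE => /andP[a /eqP b].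
by exists S.
Qed.

Section Lift.
Variables (n w' g : nat) (x0 : 'I_n) (b : {set 'I_n}).
Hypothesis hb : #|b| = w'.

Definition phi (y : 'I_w') : 'I_n := nth x0 (enum b) y.
Definition Phi (p : pts w' g) : pts n g := (phi p.1, p.2).
Definition liftB (X : {set pts w' g}) : {set pts n g} := Phi @: X.
Definition pull (Y : {set pts n g}) : {set pts w' g} := Phi @^-1: Y.

Lemma phi_inj : injective phi.
Proof.
move=> y1 y2 /eqP; rewrite /phi nth_uniq ?enum_uniq // -?cardE ?hb //.
by move/eqP/val_inj.
Qed.

Lemma phi_in y : phi y \in b.
Proof. by rewrite -mem_enum /phi mem_nth // -cardE hb. Qed.

Lemma phi_onto x : x \in b -> exists y, x = phi y.
Proof.
move=> xb; have Hi : index x (enum b) < w' by rewrite -hb cardE index_mem mem_enum.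
by exists (Ordinal Hi); rewrite /phi /= nth_index // mem_enum.
Qed.

Lemma Phi_inj : injective Phi.
Proof. by move=> [y1 a1] [y2 a2] [/phi_inj -> ->]. Qed.

Lemma liftB_inj : injective liftB.
Proof. exact: imset_inj Phi_inj. Qed.

Lemma card_lift X : #|liftB X| = #|X|.
Proof. exact: card_imset Phi_inj. Qed.

Lemma mem_lift X y a : ((phi y, a) \in liftB X) = ((y, a) \in X).
Proof. by rewrite -(mem_imset _ _ Phi_inj). Qed.

Lemma lift_in X z a : (z, a) \in liftB X -> z \in b.
Proof. by case/imsetP => [[y c] _ [-> _]]; apply: phi_in. Qed.

Lemma supp_lift X : supp (liftB X) \subset b.
Proof. by apply/subsetP => z /imsetP [[z' a] /lift_in H /= ->]. Qed.

Lemma pt_lift X : partial_transversal w' g X -> partial_transversal n g (liftB X).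
Proof.
move/ptP => H; apply/ptP => _ _ /imsetP[p pX ->] /imsetP[q qX ->] /phi_inj e.
by rewrite (H p q).
Qed.

Lemma word_lift X y : word n g (liftB X) (phi y) = word w' g X y.
Proof. by apply: eq_pick => a; rewrite /= mem_lift. Qed.

Lemma hamming_lift X1 X2 : hamming w' g X1 X2 <= hamming n g (liftB X1) (liftB X2).
Proof.
rewrite /hamming -(card_imset _ phi_inj); apply: subset_leq_card.
apply/subsetP => z /imsetP [y]; rewrite !inE => H ->; by rewrite !word_lift.
Qed.

Lemma lift_pull Y : supp Y \subset b -> liftB (pull Y) = Y.
Proof.
move=> sY; apply/setP => -[z a]; apply/idP/idP.
  by case/imsetP => p; rewrite inE => H ->.
move=> H; have : z \in b by apply: (subsetP sY); apply/imsetP; exists (z, a).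
case/phi_onto => y Hy; rewrite Hy mem_lift inE; by rewrite /Phi /= -Hy.
Qed.

Lemma pull_sub X (Y : {set pts n g}) : Y \subset liftB X -> pull Y \subset X.
Proof.
move=> /subsetP H; apply/subsetP => p; rewrite inE => /H.
by rewrite (mem_imset _ _ Phi_inj).
Qed.

End Lift.
Unset Implicit Arguments. Set Strict Implicit.

Definition Dset n w' g (x0 : 'I_n) (C : {set {set 'I_n}}) (Q : {set {set pts w' g}})
  : {set {set pts n g}} :=
  \bigcup_(b in C) ((fun X => liftB x0 b X) @: Q).
Arguments Dset {n w' g}.

Lemma arith (w t k1 k2 h : nat) : k1 < t -> k2 < t -> t <= w ->
  w - k1 + (w - k2) <= h -> 2 * (w - t) + 1 <= h.
Proof. lia. Qed.

Theorem theorem3p2 (t w w' n g : nat) :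
  0 < t -> 0 < w -> 0 < w' -> 0 < n -> 0 < g ->
  t <= w -> w <= w' ->
  (exists B : {set {set 'I_n}}, t_resolvable t w w' n B) ->
  LGS t w w' g ->
  LGS t w n g.
Proof.
move=> t0 w0 w'0 n0 g0 tw ww' [B [stB [P [partP stC]]]] [PL [partL GSL]].
pose x0 : 'I_n := Ordinal n0.
have inB C b : C \in P -> b \in C -> b \in B by move=> CP bC; apply: part_in partP CP bC.
have hb C b : C \in P -> b \in C -> #|b| = w' by move=> CP bC; apply: (stC C CP).1.
have inA Q X : Q \in PL -> X \in Q -> #|X| = w /\ partial_transversal w' g X.
  by move=> QP XQ; have := part_in partL QP XQ; rewrite inE => /andP[/eqP].
have blk C Q (Y : {set pts n g}) : C \in P -> Q \in PL -> Y \in Dset x0 C Q ->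
   exists b X, [/\ b \in C, X \in Q & Y = liftB x0 b X].
  by move=> CP QP /bigcupP [b bC /imsetP [X XQ ->]]; exists b, X.
have inD (C : {set {set 'I_n}}) (Q : {set {set pts w' g}}) b (X : {set pts w' g}) : b \in C -> X \in Q -> liftB x0 b X \in Dset x0 C Q.
  by move=> bC XQ; apply/bigcupP; exists b => //; apply: imset_f.
have blkA C Q (Y : {set pts n g}) : C \in P -> Q \in PL -> Y \in Dset x0 C Q ->
   #|Y| = w /\ partial_transversal n g Y.
  move=> CP QP /(blk _ _ _ CP QP) [b [X [bC XQ ->]]].
  have [cX pX] := inA _ _ QP XQ.
  by rewrite (card_lift _ (hb _ _ CP bC)) cX (pt_lift _ (hb _ _ CP bC)).
have csupp m (Y : {set pts m g}) : partial_transversal m g Y -> #|supp Y| = #|Y|.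
  by move/ptP; apply: card_supp.
have supp_in C b (X : {set pts w' g}) : C \in P -> b \in C ->
   supp (liftB x0 b X) \subset b.
  by move=> CP bC; apply: supp_lift (hb _ _ CP bC) X.
exists [set Dset x0 C Q | C in P, Q in PL]; split.
  apply/and3P; split.
  - apply/eqP/setP => Y; apply/bigcupP/idP.
      case=> _ /imset2P [C Q CP QP ->] YD.
      have [cY pY] := blkA _ _ _ CP QP YD.
      by rewrite inE cY eqxx pY.
    rewrite inE => /andP[/eqP cY pY].
    have [b [[bB sb] _]] := stB.2 (supp Y) (etrans (csupp _ _ pY) cY).
    have [C CP bC] := part_ex partP bB.
    have hb' := hb _ _ CP bC.
    have eY := lift_pull x0 hb' sb.
    set X := pull w' x0 b Y in eY.
    have XA : X \in all_wsets w w' g.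
      rewrite inE -(card_lift x0 hb') eY cY eqxx /=.
      apply/ptP => p q pX qX e.
      have := elimT (ptP Y) pY.
      have Pp : Phi x0 b p \in Y by rewrite -eY; apply: imset_f.
      have Pq : Phi x0 b q \in Y by rewrite -eY; apply: imset_f.
      move=> /(_ _ _ Pp Pq) H; apply: (Phi_inj hb'); apply: H; by rewrite /= e.
    have [Q QP XQ] := part_ex partL XA.
    exists (Dset x0 C Q); first by apply: imset2_f.
    by rewrite -eY; apply: inD.
  - apply/trivIsetP => _ _ /imset2P [C1 Q1 C1P Q1P ->] /imset2P [C2 Q2 C2P Q2P ->] ne.
    rewrite -setI_eq0; apply: contraNT ne => /set0Pn [Y]; rewrite inE => /andP[Y1 Y2].
    have [cY pY] := blkA _ _ _ C1P Q1P Y1.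
    have [b1 [X1 [b1C X1Q eY1]]] := blk _ _ _ C1P Q1P Y1.
    have [b2 [X2 [b2C X2Q eY2]]] := blk _ _ _ C2P Q2P Y2.
    have eb : b1 = b2.
      apply: (steiner_uniq stB (etrans (csupp _ _ pY) cY) (inB _ _ C1P b1C) _ (inB _ _ C2P b2C)).
        by rewrite eY1; apply: supp_in C1P b1C.
      by rewrite eY2; apply: supp_in C2P b2C.
    subst b2.
    have eC := part_uniq partP C1P C2P b1C b2C; subst C2.
    have eX : X1 = X2 by move: eY2; rewrite eY1 => /(liftB_inj (hb _ _ C1P b1C)).
    subst X2.
    by rewrite (part_uniq partL Q1P Q2P X1Q X2Q).
  - apply/imset2P => -[C Q CP QP e].
    have [b bC] := part_ne partP CP.
    have [X XQ] := part_ne partL QP.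
    have := inD C Q b X bC XQ.
    by rewrite -e inE.
move=> _ /imset2P [C Q CP QP ->].
have [[_ HQ] DQ] := GSL Q QP.
split; first split.
- by move=> Y YD; apply: blkA CP QP YD.
- move=> S cS dS.
  have dS' := elimT (dgP S) dS.
  have cs : #|supp S| = t by rewrite card_supp.
  have [b [[bC sb] ub]] := (stC C CP).2 (supp S) cs.
  have hb' := hb _ _ CP bC.
  have eS := lift_pull x0 hb' sb.
  set X' := pull w' x0 b S in eS.
  have cX' : #|X'| = t by rewrite -(card_lift x0 hb') eS.
  have dX' : distinct_groups w' g X'.
    apply/dgP => p q pX qX e; apply: (Phi_inj hb'); apply: dS'.
    + by rewrite -eS; apply: imset_f.
    + by rewrite -eS; apply: imset_f.
    + by rewrite /= e.
  have [X [[XQ sX] uX]] := HQ X' cX' dX'.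
  exists (liftB x0 b X); split.
    by split; [apply: inD | rewrite -eS; apply: imsetS].
  move=> Y [YD sY].
  have [b2 [X2 [b2C X2Q eY]]] := blk _ _ _ CP QP YD.
  have sb2 : supp S \subset b2.
    apply: subset_trans (supp_in C b2 X2 CP b2C); rewrite -eY; exact: imsetS sY.
  have eb := ub b2 (conj b2C sb2); subst b2.
  have eX : X = X2.
    apply: uX; split => //; apply: (pull_sub hb'); rewrite -eY; exact: sY.
  by rewrite eY eX.
- move=> Y1 Y2 Y1D Y2D ne.
  have [cY1 pY1] := blkA _ _ _ CP QP Y1D.
  have [cY2 pY2] := blkA _ _ _ CP QP Y2D.
  have [b1 [X1 [b1C X1Q eY1]]] := blk _ _ _ CP QP Y1D.
  have [b2 [X2 [b2C X2Q eY2]]] := blk _ _ _ CP QP Y2D.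
  case: (eqVneq b1 b2) => [eb|nb].
    subst b2.
    have nX : X1 != X2 by apply: contraNneq ne => eX; rewrite eY1 eY2 eX.
    apply: leq_trans (DQ X1 X2 X1Q X2Q nX) _; rewrite eY1 eY2.
    apply: (@hamming_lift n w' g x0 b1 (hb _ _ CP b1C)).
  have cA1 : #|supp Y1| = w by rewrite csupp.
  have cA2 : #|supp Y2| = w by rewrite csupp.
  have sA1 : supp Y1 \subset b1 by rewrite eY1; exact: (supp_in C b1 X1 CP b1C).
  have sA2 : supp Y2 \subset b2 by rewrite eY2; exact: (supp_in C b2 X2 CP b2C).
  have ci : #|supp Y1 :&: supp Y2| < t.
    rewrite ltnNge; apply/negP => /small_inter [T [sT cT]].
    apply: (negP nb); apply/eqP; apply: (steiner_uniq (stC C CP) cT b1C _ b2C _).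
    - by apply: subset_trans sT _; apply: subset_trans (subsetIl _ _) sA1.
    - by apply: subset_trans sT _; apply: subset_trans (subsetIr _ _) sA2.
  have ci2 : #|supp Y2 :&: supp Y1| < t by rewrite setIC.
  have sub : (supp Y1 :\: supp Y2) :|: (supp Y2 :\: supp Y1)
      \subset [set z | word n g Y1 z != word n g Y2 z].
    apply/subsetP => z; rewrite !inE -!word_supp => /orP[/andP[h2 h1]|/andP[h1 h2]];
      move: h1 h2; case: (word n g Y1 z); case: (word n g Y2 z) => //.
  have dis : (supp Y1 :\: supp Y2) :&: (supp Y2 :\: supp Y1) = set0.
    by apply/setP => z; rewrite !inE; case: (z \in supp Y1); case: (z \in supp Y2).
  have := cardsUI (supp Y1 :\: supp Y2) (supp Y2 :\: supp Y1).
  rewrite dis cards0 addn0 => cu.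
  have := subset_leq_card sub; rewrite cu !cardsD cA1 cA2 => h.
  rewrite /hamming; exact: arith ci ci2 tw h.
Qed.
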